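(* Let $n\ge1$. For every $\mathcal C\in\mathbf{Rel}^n\mathbf{Cat}$, the unit map $\eta N\mathcal C\colon N\mathcal C\to NKN\mathcal C$ of the adjunction $K\dashv N$ is an isomorphism in $\mathrm{s}^n\mathcal S$.
   Context: An $n$-relative category $\mathcal C=(a\mathcal C,v_1\mathcal C,\dots,v_n\mathcal C,w\mathcal C)$ consists of a category $a\mathcal C$ and subcategories $v_1\mathcal C,\dots,v_n\mathcal C,w\mathcal C\subset a\mathcal C$, each containing all objects, with $w\mathcal C\subset v_i\mathcal C$ for all $i$, such that (i) every map of $a\mathcal C$ is a finite composite of maps in the $v_i\mathcal C$, and (ii) every relation in $a\mathcal C$ is a consequence of the commutativity of squares $y_2x_1=x_2y_1$ with $x_1,x_2\in v_i\mathcal C$, $y_1,y_2\in v_j\mathcal C$ ($i,j$ not necessarily distinct). $\mathbf{Rel}^n\mathbf{Cat}$ is the category of small $n$-relative categories and functors of ambient categories preserving $w$ and each $v_i$. For $p\ge0$, $\mathbf p$ is the poset $0\to\cdots\to p$ and $|\mathbf p|$ its discrete subcategory; $\mathbf p_n^{v_n}\times\cdots\times\mathbf p_1^{v_1}\times\mathbf q^w$ is the $n$-relative category with ambient category $\mathbf p_n\times\cdots\times\mathbf p_1\times\mathbf q$, $w=|\mathbf p_n|\times\cdots\times|\mathbf p_1|\times\mathbf q$, $v_i=|\mathbf p_n|\times\cdots\times\mathbf p_i\times\cdots\times|\mathbf p_1|\times\mathbf q$. $\mathrm{s}^n\mathcal S$ is the category of $(n+1)$-simplicial sets with standard multisimplices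 $\Delta[p_n,\dots,p_1,q]$. The $n$-simplicial nerve $N\mathcal C$ has as $(p_n,\dots,p_1,q)$-simplices the relative functors $\mathbf p_n^{v_n}\times\cdots\times\mathbf p_1^{v_1}\times\mathbf q^w\to\mathcal C$; $K$ is its left adjoint, the colimit-preserving functor with $K\Delta[p_n,\dots,p_1,q]=\mathbf p_n^{v_n}\times\cdots\times\mathbf p_1^{v_1}\times\mathbf q^w$. *)

(* Defs.v *)
From Stdlib Require Import FunctionalExtensionality ProofIrrelevance.
From HB Require Import structures.
From mathcomp Require Import all_boot.

Set Implicit Arguments.
Unset Strict Implicit.
Unset Printing Implicit Defensive.

(* Small categories (strict: hom-equality is Leibniz equality).        *)
Record Cat := Cat_ {
  ob : Type;
  hom : ob -> ob -> Type;
  idm : forall x, hom x x;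
  cmp : forall x y z, hom y z -> hom x y -> hom x z;
  cmp_id_l : forall x y (f : hom x y), cmp (idm y) f = f;
  cmp_id_r : forall x y (f : hom x y), cmp f (idm x) = f;
  cmp_assoc : forall x y z t (f : hom x y) (g : hom y z) (h : hom z t),
      cmp h (cmp g f) = cmp (cmp h g) f }.

Arguments hom : clear implicits.
Arguments idm {c} x.
Arguments cmp {c x y z} g f.

(* Finite composable strings of maps, each labelled by an index i : 'I_n
   (meaning: "this map is regarded as a map of v_i"). *)
Inductive path (n : nat) (C : Cat) : ob C -> ob C -> Type :=
| pnil : forall x, @path n C x x
| pcons : forall x y z, 'I_n -> hom C y z -> @path n C x y -> @path n C x z.

Arguments path : clear implicits.
Arguments pnil {n C} x.
Arguments pcons {n C x y z} i f p.

Fixpoint peval n C x y (p : path n C x y) : hom C x y :=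
  match p with
  | pnil x => idm x
  | pcons _ _ _ _ f q => cmp f (peval q)
  end.

Fixpoint pvalid n C (v : 'I_n -> forall x y, hom C x y -> Prop) x y
    (p : path n C x y) : Prop :=
  match p with
  | pnil _ => True
  | pcons _ _ _ i f q => v i _ _ f /\ pvalid v q
  end.

(* concatenation: [pcat r s] is "r after s" *)
Fixpoint pcat n C x y z (r : path n C y z) : path n C x y -> path n C x z :=
  match r in path _ _ y' z' return path n C x y' -> path n C x z' with
  | pnil _ => fun s => s
  | pcons _ _ _ i f q => fun s => pcons i f (pcat q s)
  end.

Inductive sqrel n C (v : 'I_n -> forall x y, hom C x y -> Prop) :
    forall x y, path n C x y -> path n C x y -> Prop :=
| sqr_refl : forall x y (p : path n C x y), sqrel v p p
| sqr_sym : forall x y (p q : path n C x y), sqrel v p q -> sqrel v q p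
| sqr_trans : forall x y (p q r : path n C x y),
    sqrel v p q -> sqrel v q r -> sqrel v p r
| sqr_unit : forall x (i : 'I_n), sqrel v (pcons i (idm x) (pnil x)) (pnil x)
| sqr_square : forall a b c d (i j : 'I_n)
    (x1 : hom C a b) (y2 : hom C b d) (y1 : hom C a c) (x2 : hom C c d),
    v i _ _ x1 -> v i _ _ x2 -> v j _ _ y1 -> v j _ _ y2 ->
    cmp y2 x1 = cmp x2 y1 ->
    sqrel v (pcons j y2 (pcons i x1 (pnil a))) (pcons i x2 (pcons j y1 (pnil a)))
| sqr_ctx : forall x y z t (r : path n C z t) (p q : path n C y z)
    (s : path n C x y),
    sqrel v p q -> sqrel v (pcat r (pcat p s)) (pcat r (pcat q s)).

Record RelCat (n : nat) := RelCat_ {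
  amb : Cat;
  vsub : 'I_n -> forall x y, hom amb x y -> Prop;
  wsub : forall x y, hom amb x y -> Prop;
  vsub_id : forall i x, vsub i (idm x);
  vsub_cmp : forall i x y z (f : hom amb x y) (g : hom amb y z),
      vsub i f -> vsub i g -> vsub i (cmp g f);
  wsub_id : forall x, wsub (idm x);
  wsub_cmp : forall x y z (f : hom amb x y) (g : hom amb y z),
      wsub f -> wsub g -> wsub (cmp g f);
  wsub_vsub : forall i x y (f : hom amb x y), wsub f -> vsub i f;
  (* (i) every map is a finite composite of maps in the v_i *)
  rc_gen : forall x y (f : hom amb x y),
      exists p : path n amb x y, pvalid vsub p /\ peval p = f;
  (* (ii) every relation is a consequence of the commutative squares *)
  rc_rel : forall x y (p q : path n amb x y),
      pvalid vsub p -> pvalid vsub q -> peval p = peval q -> sqrel vsub p q }.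

Arguments vsub {n} C i {x y} f : rename.
Arguments wsub {n} C {x y} f : rename.

Record relfun n (C D : RelCat n) := RelFun {
  fob : ob (amb C) -> ob (amb D);
  fhom : forall x y, hom (amb C) x y -> hom (amb D) (fob x) (fob y);
  fhom_id : forall x, fhom (idm x) = idm (fob x);
  fhom_cmp : forall x y z (f : hom (amb C) x y) (g : hom (amb C) y z),
      fhom (cmp g f) = cmp (fhom g) (fhom f);
  fhom_v : forall i x y (f : hom (amb C) x y),
      vsub C i f -> vsub D i (fhom f);
  fhom_w : forall x y (f : hom (amb C) x y), wsub C f -> wsub D (fhom f) }.

(* (n+1)-simplicial sets.  A multi-index (p_n,...,p_1,q) is a function *)
(* p : 'I_n.+1 -> nat; coordinate i < n stands for p_(i+1) and        *)
(* coordinate ord_max = n stands for q.                                *)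
Definition midx (n : nat) := 'I_n.+1 -> nat.

Record mor n (p' p : midx n) := Mor {
  mfun : forall k, 'I_(p' k).+1 -> 'I_(p k).+1;
  mmono : forall k (i j : 'I_(p' k).+1), (i <= j)%N -> (@mfun k i <= @mfun k j)%N }.

Arguments mfun {n p' p} a k i : rename.
Arguments mmono {n p' p} a k {i j} _ : rename.

Definition mid n (p : midx n) : mor p p :=
  @Mor n p p (fun k i => i) (fun k i j h => h).

Definition mcomp n (p p' p'' : midx n) (a : mor p' p) (b : mor p'' p') : mor p'' p :=
  @Mor n p'' p (fun k i => mfun a k (mfun b k i))
    (fun k i j h => mmono a k (mmono b k h)).

Record sSet (n : nat) := SSet {
  sx : midx n -> Type;
  sact : forall p p', mor p' p -> sx p -> sx p';
  sact_id : forall p (x : sx p), sact (mid p) x = x;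
  sact_comp : forall p p' p'' (a : mor p' p) (b : mor p'' p') (x : sx p),
      sact (mcomp a b) x = sact b (sact a x) }.

Arguments sact {n} X {p p'} a x : rename.

Record smap n (X Y : sSet n) := SMap {
  smf : forall p, sx X p -> sx Y p;
  smf_nat : forall p p' (a : mor p' p) (x : sx X p),
      smf (sact X a x) = sact Y a (smf x) }.

Arguments smf {n X Y} f {p} x : rename.

Definition is_iso n (X Y : sSet n) (f : smap X Y) : Prop :=
  exists g : smap Y X,
    (forall p (x : sx X p), smf g (smf f x) = x) /\
    (forall p (y : sx Y p), smf f (smf g y) = y).

(* The multi-relative poset p_n^{v_n} x ... x p_1^{v_1} x q^w          *)
Definition vert n (p : midx n) := forall k : 'I_n.+1, 'I_(p k).+1.

Definition vle n (p : midx n) (u v : vert p) : bool :=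
  [forall k, (u k <= v k)%N].

Definition qidx n : 'I_n.+1 := ord_max.
Definition vidx n (i : 'I_n) : 'I_n.+1 := widen_ord (leqnSn n) i.

(* u <= v is a map of v_i: only coordinates p_i and q change *)
Definition vdir n (p : midx n) (i : 'I_n) (u v : vert p) : bool :=
  [forall k, ((k != vidx i) && (k != qidx n)) ==> (u k == v k :> nat)].
(* u <= v is a map of w: only coordinate q changes *)
Definition wdir n (p : midx n) (u v : vert p) : bool :=
  [forall k, (k != qidx n) ==> (u k == v k :> nat)].

(* a (p_n,...,p_1,q)-simplex of N C: a relative functor
   p_n^{v_n} x ... x p_1^{v_1} x q^w -> C, written out *)
Record simplex n (C : RelCat n) (p : midx n) := Simplex {
  sob : vert p -> ob (amb C);
  shom : forall u v, vle u v -> hom (amb C) (sob u) (sob v);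
  shom_id : forall u (H : vle u u), shom H = idm (sob u);
  shom_cmp : forall u v t (H1 : vle u v) (H2 : vle v t) (H3 : vle u t),
      shom H3 = cmp (shom H2) (shom H1);
  shom_v : forall i u v (H : vle u v), vdir i u v -> vsub C i (shom H);
  shom_w : forall u v (H : vle u v), wdir u v -> wsub C (shom H) }.

Definition vmap n (p p' : midx n) (a : mor p' p) (u : vert p') : vert p :=
  fun k => mfun a k (u k).

Lemma vle_map n (p p' : midx n) (a : mor p' p) (u v : vert p') :
  vle u v -> vle (vmap a u) (vmap a v).
Proof. by move=> /forallP H; apply/forallP => k; apply: mmono. Qed.

Lemma vdir_map n (p p' : midx n) (a : mor p' p) i (u v : vert p') :
  vdir i u v -> vdir i (vmap a u) (vmap a v).
Proof.
move=> /forallP H; apply/forallP => k; apply/implyP => hk; rewrite /vmap.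
by move/implyP: (H k) => /(_ hk) /eqP /val_inj ->.
Qed.

Lemma wdir_map n (p p' : midx n) (a : mor p' p) (u v : vert p') :
  wdir u v -> wdir (vmap a u) (vmap a v).
Proof.
move=> /forallP H; apply/forallP => k; apply/implyP => hk; rewrite /vmap.
by move/implyP: (H k) => /(_ hk) /eqP /val_inj ->.
Qed.

Definition spull n (C : RelCat n) (p p' : midx n) (a : mor p' p)
    (s : simplex C p) : simplex C p'.
Proof.
refine (@Simplex n C p' (fun u => sob s (vmap a u))
          (fun u v H => shom s (vle_map a H)) _ _ _ _).
- by move=> u H; apply: shom_id.
- by move=> u v t H1 H2 H3; apply: shom_cmp.
- by move=> i u v H hd; apply: shom_v; apply: vdir_map.
- by move=> u v H hd; apply: shom_w; apply: wdir_map.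
Defined.

Lemma simplex_ext n (C : RelCat n) (p : midx n) (o : vert p -> ob (amb C))
  (h1 h2 : forall u v, vle u v -> hom (amb C) (o u) (o v)) a1 b1 c1 d1 a2 b2 c2 d2 :
  (forall u v H, h1 u v H = h2 u v H) ->
  @Simplex n C p o h1 a1 b1 c1 d1 = @Simplex n C p o h2 a2 b2 c2 d2.
Proof.
move=> E.
have E' : h1 = h2.
  apply: functional_extensionality_dep => u.
  apply: functional_extensionality_dep => v.
  apply: functional_extensionality_dep => H.
  exact: E.
subst h2; f_equal; apply: proof_irrelevance.
Qed.

Definition nerve n (C : RelCat n) : sSet n.
Proof.
refine (@SSet n (simplex C) (fun p p' a s => spull a s) _ _).
- move=> p [o h a b c d]; rewrite /spull /=.
  apply: simplex_ext => u v H /=.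
  by rewrite (bool_irrelevance (vle_map (mid p) H) H).
- move=> p p' p'' a b [o h a1 b1 c1 d1]; rewrite /spull /=.
  apply: simplex_ext => u v H /=.
  by congr (h _ _ _); apply: bool_irrelevance.
Defined.

Definition spush n (C D : RelCat n) (F : relfun C D) (p : midx n)
    (s : simplex C p) : simplex D p.
Proof.
refine (@Simplex n D p (fun u => fob F (sob s u))
          (fun u v H => fhom F (shom s H)) _ _ _ _).
- by move=> u H; rewrite shom_id fhom_id.
- by move=> u v t H1 H2 H3; rewrite (shom_cmp s H1 H2 H3) fhom_cmp.
- by move=> i u v H hd; apply: fhom_v; apply: shom_v.
- by move=> u v H hd; apply: fhom_w; apply: shom_w.
Defined.

Definition nerve_map n (C D : RelCat n) (F : relfun C D) :
  smap (nerve C) (nerve D).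
Proof.
refine (@SMap n (nerve C) (nerve D) (fun p s => spush F s) _).
move=> p p' a [o h a1 b1 c1 d1] /=; rewrite /spull /spush /=.
by apply: simplex_ext.
Defined.

(* (K X, eta_X : X -> N K X) is a universal arrow from X to N, i.e.
   K is the left adjoint of N and eta is the unit of K -| N. *)
Definition unit_universal n (X : sSet n) (KX : RelCat n)
    (eta : smap X (nerve KX)) : Prop :=
  forall (C : RelCat n) (f : smap X (nerve C)),
    exists g : relfun KX C,
      (forall p (x : sx X p), smf (nerve_map g) (smf eta x) = smf f x) /\
      (forall g' : relfun KX C,
          (forall p (x : sx X p), smf (nerve_map g') (smf eta x) = smf f x) ->
          g' = g).

(* Main.v *)
From Stdlib Require Import FunctionalExtensionality ProofIrrelevance Eqdep ClassicalEpsilon.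
Require Import Defs.
From mathcomp Require Import all_boot.
Set Implicit Arguments. Unset Strict Implicit. Unset Printing Implicit Defensive.

Definition Arr (C : Cat) := {x : ob C & {y : ob C & hom C x y}}.
Definition mkA (C : Cat) (x y : ob C) (h : hom C x y) : Arr C :=
  existT _ x (existT _ y h).
Arguments mkA {C x y} h.
Definition srcA C (a : Arr C) := projT1 a.
Definition tgtA C (a : Arr C) := projT1 (projT2 a).
Definition homA C (a : Arr C) : hom C (srcA a) (tgtA a) := projT2 (projT2 a).

Definition castA C (a : Arr C) X Y (e1 : srcA a = X) (e2 : tgtA a = Y) : hom C X Y :=
  eq_rect _ (fun Y => hom C X Y)
    (eq_rect _ (fun X => hom C X (tgtA a)) (homA a) X e1) Y e2.

Lemma mkA_castA C (a : Arr C) X Y (e1 : srcA a = X) (e2 : tgtA a = Y) :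
  mkA (castA e1 e2) = a.
Proof. by case: a e1 e2 => x [y h] /= e1 e2; subst. Qed.

Lemma mkA_inj C (x y : ob C) (h h' : hom C x y) : mkA h = mkA h' -> h = h'.
Proof. by move=> E; do 2 apply inj_pair2 in E. Qed.

Lemma mkA_ob C (x y x' y' : ob C) (h : hom C x y) (h' : hom C x' y') :
  mkA h = mkA h' -> x = x' /\ y = y'.
Proof.
move=> E; have e1 := f_equal (@srcA C) E; have e2 := f_equal (@tgtA C) E.
by [].
Qed.

Lemma mkA_cmp C (x y z x' y' z' : ob C) (h1 : hom C x y) (h2 : hom C y z)
  (h1' : hom C x' y') (h2' : hom C y' z') :
  mkA h1 = mkA h1' -> mkA h2 = mkA h2' -> mkA (cmp h2 h1) = mkA (cmp h2' h1').
Proof.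
move=> E1 E2; case: (mkA_ob E1) => ex ey; subst x' y'.
case: (mkA_ob E2) => _ ez; subst z'.
by rewrite (mkA_inj E1) (mkA_inj E2).
Qed.

Definition compat C (a b c : Arr C) : Prop :=
  exists x y z (h1 : hom C x y) (h2 : hom C y z),
    a = mkA h1 /\ b = mkA h2 /\ c = mkA (cmp h2 h1).

Lemma compat_uniq C (a b c c' : Arr C) : compat a b c -> compat a b c' -> c = c'.
Proof.
move=> [x [y [z [h1 [h2 [E1 [E2 E3]]]]]]] [x' [y' [z' [h1' [h2' [E1' [E2' E3']]]]]]].
subst; apply: mkA_cmp; by [rewrite -E1' | rewrite -E2'].
Qed.

Lemma compat_mk C (x y z : ob C) (h1 : hom C x y) (h2 : hom C y z) :
  compat (mkA h1) (mkA h2) (mkA (cmp h2 h1)).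
Proof. by exists x, y, z, h1, h2. Qed.

Lemma compat_idl C (x y : ob C) (h : hom C x y) : compat (mkA (idm x)) (mkA h) (mkA h).
Proof. by have := compat_mk (idm x) h; rewrite cmp_id_r. Qed.
Lemma compat_idr C (x y : ob C) (h : hom C x y) : compat (mkA h) (mkA (idm y)) (mkA h).
Proof. by have := compat_mk h (idm y); rewrite cmp_id_l. Qed.

Lemma compat_idr_eq C (a c : Arr C) (y : ob C) : compat a (mkA (idm y)) c -> c = a.
Proof.
move=> [x0 [y0 [z0 [h1 [h2 [E1 [E2 E3]]]]]]]; subst.
case: (mkA_ob E2) => e1 e2; subst; rewrite -(mkA_inj E2) cmp_id_l //.
Qed.

Section S2.
Variable n : nat.
Variable C : RelCat n.
Notation A := (amb C).

Definition sarr (p : midx n) (s : simplex C p) (u v : vert p) (H : vle u v) : Arr A := mkA (shom s H).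

Lemma vle_refl (p : midx n) (u : vert p) : vle u u.
Proof. by apply/forallP => k. Qed.

Lemma vle_trans (p : midx n) (u v t : vert p) : vle u v -> vle v t -> vle u t.
Proof. move=> /forallP H1 /forallP H2; apply/forallP => k; exact: leq_trans (H1 k) (H2 k). Qed.

Lemma sarr_eq (p : midx n) (s : simplex C p) u v u' v' (H : vle u v) (H' : vle u' v') :
  u = u' -> v = v' -> sarr s H = sarr s H'.
Proof. move=> e1 e2; subst; by rewrite (bool_irrelevance H H'). Qed.

Lemma sarr_id (p : midx n) (s : simplex C p) u (H : vle u u) : sarr s H = mkA (idm (sob s u)).
Proof. by rewrite /sarr shom_id. Qed.

Lemma sarr_cmp (p : midx n) (s : simplex C p) u v t (H1 : vle u v) (H2 : vle v t) (H3 : vle u t) :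
  compat (sarr s H1) (sarr s H2) (sarr s H3).
Proof. rewrite /sarr (shom_cmp s H1 H2 H3); exact: compat_mk. Qed.

Lemma simplex_eqA (p : midx n) (s t : simplex C p) :
  (forall u v (H : vle u v), sarr s H = sarr t H) -> s = t.
Proof.
case: s => o1 h1 a1 b1 c1 d1; case: t => o2 h2 a2 b2 c2 d2 /= E.
have eo : o1 = o2.
  apply: functional_extensionality_dep => u.
  by case: (mkA_ob (E u u (vle_refl u))).
subst o2; apply: simplex_ext => u v H; exact: mkA_inj (E u v H).
Qed.

Lemma sarr_spull (p p' : midx n) (a : mor p' p) (s : simplex C p) u v (H : vle u v) :
  sarr (spull a s) H = sarr s (vle_map a H).
Proof. by []. Qed.

Definition vsubA i (a : Arr A) := vsub C i (homA a).
Definition wsubA (a : Arr A) := wsub C (homA a).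

Section Build.
Variable p : midx n.
Variable o : vert p -> ob A.
Variable hm : vert p -> vert p -> Arr A.
Hypothesis Hs : forall u v, vle u v -> srcA (hm u v) = o u.
Hypothesis Ht : forall u v, vle u v -> tgtA (hm u v) = o v.
Hypothesis Hid : forall u, hm u u = mkA (idm (o u)).
Hypothesis Hc : forall u v t, vle u v -> vle v t -> compat (hm u v) (hm v t) (hm u t).
Hypothesis Hv : forall i u v, vle u v -> vdir i u v -> vsubA i (hm u v).
Hypothesis Hw : forall u v, vle u v -> wdir u v -> wsubA (hm u v).

Definition bhom u v (H : vle u v) : hom A (o u) (o v) := castA (Hs H) (Ht H).

Lemma bhomA u v (H : vle u v) : mkA (bhom H) = hm u v.
Proof. exact: mkA_castA. Qed.

Definition mkS : simplex C p.
Proof.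
refine (@Simplex n C p o bhom _ _ _ _).
- move=> u H; apply: mkA_inj; by rewrite bhomA Hid.
- move=> u v t H1 H2 H3; apply: mkA_inj; rewrite bhomA.
  have := Hc H1 H2; rewrite -(bhomA H1) -(bhomA H2) => Hc'.
  exact: compat_uniq Hc' (compat_mk _ _).
- move=> i u v H hd; have := Hv H hd; rewrite -(bhomA H); by [].
- move=> u v H hd; have := Hw H hd; rewrite -(bhomA H); by [].
Defined.

Lemma sarr_mkS u v (H : vle u v) : sarr mkS H = hm u v.
Proof. exact: bhomA. Qed.

Lemma sob_mkS u : sob mkS u = o u.
Proof. by []. Qed.
End Build.
End S2.

Section S3.
Variable n : nat.
Variable C : RelCat n.
Notation A := (amb C).

Definition okv (j : 'I_n.+1) (i : 'I_n) : bool := (j == vidx i) || (j == qidx n).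

Lemma vdir_diff (p : midx n) i (u v : vert p) j :
  vdir i u v -> (u j : nat) != v j -> okv j i.
Proof.
move=> /forallP /(_ j) H ne; rewrite /okv; apply/negPn/negP => /norP [h1 h2].
by move: H; rewrite h1 h2 /= (negbTE ne).
Qed.

Lemma wdir_diff (p : midx n) (u v : vert p) j :
  wdir u v -> (u j : nat) != v j -> j == qidx n.
Proof.
move=> /forallP /(_ j) H ne; apply/negPn/negP => h1.
by move: H; rewrite h1 /= (negbTE ne).
Qed.

Lemma vle_at (p : midx n) (u v : vert p) j : vle u v -> (u j <= v j)%N.
Proof. by move=> /forallP. Qed.

Section Pt.
Variable p : midx n.
Variable c : ob A.
Definition ptS : simplex C p.
Proof.
refine (@mkS n C p (fun _ => c) (fun _ _ => mkA (idm c)) _ _ _ _ _ _) => //.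
- by move=> u v t _ _; have := compat_mk (idm c) (idm c); rewrite cmp_id_l.
- by move=> i u v _ _; exact: vsub_id.
- by move=> u v _ _; exact: wsub_id.
Defined.
Lemma sarr_pt u v (H : vle u v) : sarr ptS H = mkA (idm c).
Proof. exact: sarr_mkS. Qed.
End Pt.

Section Ch.
Variable p : midx n.
Variable k : 'I_n.+1.
Variables a b c : ob A.
Variable x : hom A a b.
Variable y : hom A b c.
Hypothesis cv : forall i, okv k i -> vsub C i x /\ vsub C i y.
Hypothesis cw : k == qidx n -> wsub C x /\ wsub C y.

Definition chO (t : nat) := match t with 0 => a | 1 => b | _ => c end.
Definition chA (s t : nat) : Arr A :=
  match s with
  | 0 => match t with 0 => mkA (idm a) | 1 => mkA x | _ => mkA (cmp y x) end
  | 1 => match t with 0 => mkA (idm a) | 1 => mkA (idm b) | _ => mkA y end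
  | _ => match t with 0 | 1 => mkA (idm a) | _ => mkA (idm c) end
  end.

Lemma chA_src s t : (s <= t)%N -> srcA (chA s t) = chO s.
Proof. by case: s => [|[|s]]; case: t => [|[|t]]. Qed.
Lemma chA_tgt s t : (s <= t)%N -> tgtA (chA s t) = chO t.
Proof. by case: s => [|[|s]]; case: t => [|[|t]]. Qed.
Lemma chA_id s : chA s s = mkA (idm (chO s)).
Proof. by case: s => [|[|s]]. Qed.
Lemma chA_cmp s t r : (s <= t)%N -> (t <= r)%N -> compat (chA s t) (chA t r) (chA s r).
Proof.
case: s => [|[|s]]; case: t => [|[|t]]; case: r => [|[|r]] //= _ _;
  first [exact: compat_mk | exact: compat_idl | exact: compat_idr].
Qed.

Lemma chA_v i s t : (s <= t)%N -> (s != t -> okv k i) -> vsubA i (chA s t).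
Proof.
case: s => [|[|s]]; case: t => [|[|t]] //= _ ok; rewrite /vsubA /homA /=;
  try exact: vsub_id; try (by case: (cv (ok isT))).
case: (cv (ok isT)) => *; exact: vsub_cmp.
Qed.

Lemma chA_w s t : (s <= t)%N -> (s != t -> k == qidx n) -> wsubA (chA s t).
Proof.
case: s => [|[|s]]; case: t => [|[|t]] //= _ ok; rewrite /wsubA /homA /=;
  try exact: wsub_id; try (by case: (cw (ok isT))).
case: (cw (ok isT)) => *; exact: wsub_cmp.
Qed.

Definition ChS : simplex C p.
Proof.
refine (@mkS n C p (fun u => chO (u k)) (fun u v => chA (u k) (v k)) _ _ _ _ _ _).
- by move=> u v H; apply: chA_src; apply: vle_at.
- by move=> u v H; apply: chA_tgt; apply: vle_at.
- by move=> u; apply: chA_id.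
- by move=> u v t H1 H2; apply: chA_cmp; apply: vle_at.
- move=> i u v H hd; apply: chA_v; first exact: vle_at.
  by move=> ne; apply: (vdir_diff hd ne).
- move=> u v H hd; apply: chA_w; first exact: vle_at.
  by move=> ne; apply: (wdir_diff hd ne).
Defined.

Lemma sarr_Ch u v (H : vle u v) : sarr ChS H = chA (u k) (v k).
Proof. exact: sarr_mkS. Qed.
Lemma sob_Ch u : sob ChS u = chO (u k).
Proof. by []. Qed.
End Ch.

Section Sq.
Variable p : midx n.
Variables k l : 'I_n.+1.
Hypothesis kl : k != l.
Variables a b c d : ob A.
Variable x1 : hom A a b.
Variable y2 : hom A b d.
Variable y1 : hom A a c.
Variable x2 : hom A c d.
Hypothesis E : cmp y2 x1 = cmp x2 y1.
Hypothesis cx : forall i, okv k i -> vsub C i x1 /\ vsub C i x2.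
Hypothesis cy : forall i, okv l i -> vsub C i y1 /\ vsub C i y2.
Hypothesis wx : k == qidx n -> wsub C x1 /\ wsub C x2.
Hypothesis wy : l == qidx n -> wsub C y1 /\ wsub C y2.

Definition sqO (b1 b2 : bool) := if b1 then (if b2 then d else b) else (if b2 then c else a).
Definition sqA (b1 b2 c1 c2 : bool) : Arr A :=
  match b1, b2, c1, c2 with
  | false, false, false, false => mkA (idm a)
  | false, false, true, false => mkA x1
  | false, false, false, true => mkA y1
  | false, false, true, true => mkA (cmp y2 x1)
  | true, false, true, false => mkA (idm b)
  | true, false, true, true => mkA y2
  | false, true, false, true => mkA (idm c)
  | false, true, true, true => mkA x2
  | true, true, true, true => mkA (idm d)
  | _, _, _, _ => mkA (idm a)
  end.

Lemma sqA_src (b1 b2 c1 c2 : bool) : (b1 <= c1)%N -> (b2 <= c2)%N -> srcA (sqA b1 b2 c1 c2) = sqO b1 b2.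
Proof. by case: b1; case: b2; case: c1; case: c2. Qed.
Lemma sqA_tgt (b1 b2 c1 c2 : bool) : (b1 <= c1)%N -> (b2 <= c2)%N -> tgtA (sqA b1 b2 c1 c2) = sqO c1 c2.
Proof. by case: b1; case: b2; case: c1; case: c2. Qed.
Lemma sqA_id (b1 b2 : bool) : sqA b1 b2 b1 b2 = mkA (idm (sqO b1 b2)).
Proof. by case: b1; case: b2. Qed.
Lemma sqA_cmp (b1 b2 c1 c2 e1 e2 : bool) : (b1 <= c1)%N -> (b2 <= c2)%N -> (c1 <= e1)%N -> (c2 <= e2)%N ->
  compat (sqA b1 b2 c1 c2) (sqA c1 c2 e1 e2) (sqA b1 b2 e1 e2).
Proof.
case: b1; case: b2; case: c1; case: c2; case: e1; case: e2 => //= _ _ _ _;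
  first [exact: compat_mk | exact: compat_idl | exact: compat_idr | (rewrite E; exact: compat_mk)].
Qed.

Lemma sqA_v i (b1 b2 c1 c2 : bool) : (b1 <= c1)%N -> (b2 <= c2)%N ->
  (b1 != c1 -> okv k i) -> (b2 != c2 -> okv l i) -> vsubA i (sqA b1 b2 c1 c2).
Proof.
case: b1; case: b2; case: c1; case: c2 => //= _ _ o1 o2; rewrite /vsubA /homA /=;
  try exact: vsub_id; try (by case: (cx (o1 isT))); try (by case: (cy (o2 isT))).
case: (cx (o1 isT)) => ? _; case: (cy (o2 isT)) => _ ?; exact: vsub_cmp.
Qed.

Lemma sqA_w (b1 b2 c1 c2 : bool) : (b1 <= c1)%N -> (b2 <= c2)%N ->
  (b1 != c1 -> k == qidx n) -> (b2 != c2 -> l == qidx n) -> wsubA (sqA b1 b2 c1 c2).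
Proof.
case: b1; case: b2; case: c1; case: c2 => //= _ _ o1 o2; rewrite /wsubA /homA /=;
  try exact: wsub_id; try (by case: (wx (o1 isT))); try (by case: (wy (o2 isT))).
by move: kl; rewrite (eqP (o1 isT)) (eqP (o2 isT)) eqxx.
Qed.

Definition bit (u : vert p) j : bool := (0 < u j)%N.

Lemma bit_le u v j : vle u v -> (bit u j <= bit v j)%N.
Proof.
move=> /forallP /(_ j) h; rewrite /bit.
by case: (posnP (v j)) h => [->|]; [rewrite leqn0 => /eqP -> | case: (0 < u j)%N].
Qed.

Lemma bit_ne u v j : bit u j != bit v j -> (u j : nat) != v j.
Proof. by rewrite /bit; apply: contra => /eqP ->. Qed.

Definition SqS : simplex C p.
Proof.
refine (@mkS n C p (fun u => sqO (bit u k) (bit u l))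
   (fun u v => sqA (bit u k) (bit u l) (bit v k) (bit v l)) _ _ _ _ _ _).
- by move=> u v H; apply: sqA_src; apply: bit_le.
- by move=> u v H; apply: sqA_tgt; apply: bit_le.
- by move=> u; apply: sqA_id.
- by move=> u v t H1 H2; apply: sqA_cmp; apply: bit_le.
- move=> i u v H hd; apply: sqA_v; try exact: bit_le;
  by move=> /bit_ne ne; apply: (vdir_diff hd ne).
- move=> u v H hd; apply: sqA_w; try exact: bit_le;
  by move=> /bit_ne ne; apply: (wdir_diff hd ne).
Defined.

Lemma sarr_Sq u v (H : vle u v) : sarr SqS H = sqA (bit u k) (bit u l) (bit v k) (bit v l).
Proof. exact: sarr_mkS. Qed.
End Sq.
End S3.

Section S4.
Variable n : nat.

Definition p0 : midx n := fun _ => 0.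
Definition lnp (k : 'I_n.+1) : midx n := fun j => if j == k then 1 else 0.
Definition chp (k : 'I_n.+1) : midx n := fun j => if j == k then 2 else 0.
Definition sqp (k l : 'I_n.+1) : midx n := fun j => if (j == k) || (j == l) then 1 else 0.

Definition mkv (p : midx n) (t : 'I_n.+1 -> nat) : vert p := fun j => inord (t j).
Lemma mkvE (p : midx n) (t : 'I_n.+1 -> nat) j : (t j <= p j)%N -> (mkv p t j : nat) = t j.
Proof. by move=> h; rewrite /mkv inordK. Qed.

Definition v0 : vert p0 := fun j => ord0.

Definition constmor (p' p : midx n) (w : vert p) : mor p' p :=
  @Mor n p' p (fun j _ => w j) (fun j i i' _ => leqnn _).

Lemma edgemor_mono (p p' : midx n) k (w0 w1 : vert p) (H : vle w0 w1) j
  (i i' : 'I_(p' j).+1) : (i <= i')%N ->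
  ((if (0 < i)%N && (j == k) then w1 j else w0 j) <= (if (0 < i')%N && (j == k) then w1 j else w0 j))%N.
Proof.
move=> le; case: (j == k); rewrite ?andbT ?andbF /=; last exact: leqnn.
case: (posnP i) => [e|pi]; case: (posnP i') => [e'|pi'] /=.
- exact: leqnn.
- exact: vle_at.
- by move: le; rewrite e' leqn0 => /eqP e; move: pi; rewrite e.
- exact: leqnn.
Qed.

Definition edgemor (p' p : midx n) k (w0 w1 : vert p) (H : vle w0 w1) : mor p' p :=
  @Mor n p' p (fun j t => if (0 < t)%N && (j == k) then w1 j else w0 j)
    (fun j i i' le => @edgemor_mono p p' k w0 w1 H j i i' le).

Lemma vmap_edge (p' p : midx n) k (w0 w1 : vert p) (H : vle w0 w1)
  (Hk : forall j, j != k -> w0 j = w1 j) (u : vert p') :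
  vmap (edgemor p' k H) u = if (0 < u k)%N then w1 else w0.
Proof.
apply: functional_extensionality_dep => j; rewrite /vmap /=.
case: (eqVneq j k) => [->|ne]; first by rewrite andbT; case: (0 < u k)%N.
by rewrite andbF; case: (0 < u k)%N => //; apply: Hk.
Qed.

Lemma lnp_le k (u : vert (lnp k)) : (u k <= 1)%N.
Proof. by move: (ltn_ord (u k)); move: (nat_of_ord (u k)) => t; rewrite /lnp eqxx. Qed.

Variable C : RelCat n.
Notation A := (amb C).

Section Edge.
Variable k : 'I_n.+1.
Variables x y : ob A.
Variable h : hom A x y.
Hypothesis cv : forall i, okv k i -> vsub C i h.
Hypothesis cw : k == qidx n -> wsub C h.

Lemma ecv i : okv k i -> vsub C i h /\ vsub C i (idm y).
Proof. by move=> o; split; [apply: cv | apply: vsub_id]. Qed.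
Lemma ecw : k == qidx n -> wsub C h /\ wsub C (idm y).
Proof. by move=> o; split; [apply: cw | apply: wsub_id]. Qed.

Definition EdgeS : simplex C (lnp k) := @ChS n C (lnp k) k x y y h (idm y) ecv ecw.

Lemma sarr_Edge u v (H : vle u v) :
  sarr EdgeS H = if (0 < u k)%N then mkA (idm y) else if (0 < v k)%N then mkA h else mkA (idm x).
Proof.
rewrite /EdgeS sarr_Ch; have := lnp_le u; have := lnp_le v; have := vle_at k H.
by case: (u k : nat) => [|[|?]]; case: (v k : nat) => [|[|?]].
Qed.
End Edge.

Lemma EdgeS_irr k x y (h : hom A x y) cv cw cv' cw' : @EdgeS k x y h cv cw = @EdgeS k x y h cv' cw'.
Proof. by rewrite (proof_irrelevance _ cv cv') (proof_irrelevance _ cw cw'). Qed.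

Section EdgeOf.
Variable p : midx n.
Variable s : simplex C p.
Variable k : 'I_n.+1.
Variables w0 w1 : vert p.
Variable H : vle w0 w1.
Hypothesis Hk : forall j, j != k -> w0 j = w1 j.

Lemma edge_cv i : okv k i -> vsub C i (shom s H).
Proof.
move=> o; apply: shom_v; apply/forallP => j; apply/implyP => /andP [h1 h2].
have ne : j != k by apply/eqP => e; move: o; rewrite /okv -e (negbTE h1) (negbTE h2).
by rewrite (Hk ne).
Qed.

Lemma edge_cw : k == qidx n -> wsub C (shom s H).
Proof.
move=> /eqP o; apply: shom_w; apply/forallP => j; apply/implyP => h1.
have ne : j != k by rewrite o.
by rewrite (Hk ne).
Qed.

Lemma spull_edge : spull (edgemor (lnp k) k H) s = EdgeS edge_cv edge_cw.
Proof.
apply: simplex_eqA => u v H'; rewrite sarr_spull sarr_Edge.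
have H2 : vle (if (0 < u k)%N then w1 else w0) (if (0 < v k)%N then w1 else w0).
  by rewrite -!(vmap_edge _ Hk); apply: vle_map.
rewrite (sarr_eq s (vle_map _ H') H2 (vmap_edge _ Hk u) (vmap_edge _ Hk v)).
move: H2; have := bit_le k H'; rewrite /bit.
case: (0 < u k)%N; case: (0 < v k)%N => // _ H2; try by rewrite sarr_id.
by rewrite /sarr (bool_irrelevance H2 H).
Qed.
End EdgeOf.

Lemma spull_const (p : midx n) (s : simplex C p) (w : vert p) :
  spull (constmor p0 w) s = ptS p0 (sob s w).
Proof.
apply: simplex_eqA => u v H; rewrite sarr_spull sarr_pt.
have H2 : vle w w by apply: vle_refl.
by rewrite (sarr_eq s _ H2 (erefl w) (erefl w)) sarr_id.
Qed.

Lemma spull_const_edge k (x : ob A) cv cw :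
  spull (constmor (lnp k) v0) (ptS p0 x) = @EdgeS k x x (idm x) cv cw.
Proof.
apply: simplex_eqA => u v H; rewrite sarr_spull sarr_pt sarr_Edge.
by case: (0 < u k)%N; case: (0 < v k)%N.
Qed.
End S4.

Section S5.
Variable n : nat.

Lemma mkv_le (p : midx n) (t0 t1 : 'I_n.+1 -> nat) :
  (forall j, t0 j <= t1 j)%N -> (forall j, t1 j <= p j)%N -> vle (mkv p t0) (mkv p t1).
Proof.
move=> h1 h2; apply/forallP => j; rewrite !mkvE //; exact: leq_trans (h1 j) (h2 j).
Qed.

Lemma mkv_eq (p : midx n) (t0 t1 : 'I_n.+1 -> nat) k :
  (forall j, j != k -> t0 j = t1 j) -> forall j, j != k -> mkv p t0 j = mkv p t1 j.
Proof. by move=> h j ne; rewrite /mkv h. Qed.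

Lemma mkv_bit (p : midx n) (t : 'I_n.+1 -> nat) j : (t j <= p j)%N ->
  (0 < mkv p t j)%N = (0 < t j)%N.
Proof. by move=> h; rewrite mkvE. Qed.

Variables C D : RelCat n.
Variable f : smap (nerve C) (nerve D).
Notation AC := (amb C).
Notation AD := (amb D).

Definition F (p : midx n) (s : simplex C p) : simplex D p := @smf n _ _ f p s.
Definition FA (p : midx n) (s : simplex C p) u v (H : vle u v) := sarr (F s) H.

Lemma F_pull (p p' : midx n) (a : mor p' p) (s : simplex C p) : F (spull a s) = spull a (F s).
Proof. exact: (smf_nat f a s). Qed.

Lemma FA_pull (p p' : midx n) (a : mor p' p) (s : simplex C p) u v (H : vle u v) :
  FA (spull a s) H = FA s (vle_map a H).
Proof. by rewrite /FA F_pull. Qed.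

Lemma FA_eq (p : midx n) (s : simplex C p) u v u' v' (H : vle u v) (H' : vle u' v') :
  u = u' -> v = v' -> FA s H = FA s H'.
Proof. exact: sarr_eq. Qed.

Definition gob (x : ob AC) : ob AD := sob (F (@ptS n C (@p0 n) x)) (@v0 n).

Lemma gob_vertex (p : midx n) (s : simplex C p) w : sob (F s) w = gob (sob s w).
Proof. by rewrite /gob -spull_const F_pull. Qed.

Lemma FA_src (p : midx n) (s : simplex C p) u v (H : vle u v) : srcA (FA s H) = gob (sob s u).
Proof. exact: gob_vertex. Qed.
Lemma FA_tgt (p : midx n) (s : simplex C p) u v (H : vle u v) : tgtA (FA s H) = gob (sob s v).
Proof. exact: gob_vertex. Qed.

Definition e0 (k : 'I_n.+1) : vert (lnp k) := mkv (lnp k) (fun _ => 0).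
Definition e1 (k : 'I_n.+1) : vert (lnp k) := mkv (lnp k) (fun j => if j == k then 1 else 0).

Lemma lnp_b (k j : 'I_n.+1) : ((if j == k then 1 else 0) <= lnp k j)%N.
Proof. by rewrite /lnp; case: (j == k). Qed.

Lemma e01 (k : 'I_n.+1) : vle (e0 k) (e1 k).
Proof. by apply: mkv_le => j. Qed.

Lemma e0_bit (k : 'I_n.+1) : (0 < e0 k k)%N = false.
Proof. by rewrite /e0 mkv_bit. Qed.
Lemma e1_bit (k : 'I_n.+1) : (0 < e1 k k)%N = true.
Proof. by rewrite /e1 mkv_bit ?eqxx // /lnp eqxx. Qed.

Definition EA (k : 'I_n.+1) (x y : ob AC) (h : hom AC x y) cv cw : Arr AD :=
  FA (@EdgeS n C k x y h cv cw) (e01 k).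

Lemma sarr_Edge01 (k : 'I_n.+1) x y (h : hom AC x y) cv cw : sarr (@EdgeS n C k x y h cv cw) (e01 k) = mkA h.
Proof. by rewrite sarr_Edge e0_bit e1_bit. Qed.

Lemma sob_Edge0 (k : 'I_n.+1) x y (h : hom AC x y) cv cw : sob (@EdgeS n C k x y h cv cw) (e0 k) = x.
Proof. by rewrite /EdgeS sob_Ch /e0 mkvE. Qed.
Lemma sob_Edge1 (k : 'I_n.+1) x y (h : hom AC x y) cv cw : sob (@EdgeS n C k x y h cv cw) (e1 k) = y.
Proof. by rewrite /EdgeS sob_Ch /e1 mkvE ?eqxx // /lnp eqxx. Qed.

Lemma EA_src (k : 'I_n.+1) x y (h : hom AC x y) cv cw : srcA (@EA k x y h cv cw) = gob x.
Proof. by rewrite /EA FA_src sob_Edge0. Qed.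
Lemma EA_tgt (k : 'I_n.+1) x y (h : hom AC x y) cv cw : tgtA (@EA k x y h cv cw) = gob y.
Proof. by rewrite /EA FA_tgt sob_Edge1. Qed.

Lemma EA_mkA (k : 'I_n.+1) x y x' y' (h : hom AC x y) (h' : hom AC x' y') cv cw cv' cw' :
  mkA h = mkA h' -> @EA k x y h cv cw = @EA k x' y' h' cv' cw'.
Proof.
move=> E; case: (mkA_ob E) => ex ey; subst x' y'; have eh := mkA_inj E; subst h'.
by rewrite /EA (EdgeS_irr cv cw cv' cw').
Qed.

Lemma FA_edge (p : midx n) (s : simplex C p) k (w0 w1 : vert p) (H : vle w0 w1)
  (Hk : forall j, j != k -> w0 j = w1 j) :
  FA s H = EA (edge_cv s H Hk) (edge_cw s H Hk).
Proof.
rewrite /EA -(spull_edge s H Hk) FA_pull; apply: FA_eq.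
- by rewrite (vmap_edge _ Hk) e0_bit.
- by rewrite (vmap_edge _ Hk) e1_bit.
Qed.

Lemma EA_id (k : 'I_n.+1) x cv cw : @EA k x x (idm x) cv cw = mkA (idm (gob x)).
Proof.
rewrite /EA -(@spull_const_edge n C k x cv cw) FA_pull /FA.
by rewrite sarr_id.
Qed.
End S5.

Section S6.
Variable n : nat.
Variables C D : RelCat n.
Variable f : smap (nerve C) (nerve D).
Notation AC := (amb C).
Notation AD := (amb D).
Notation EA := (@EA n C D f).
Notation FA := (@FA n C D f).

Section Chain.
Variable k : 'I_n.+1.
Definition cvx (t : nat) : vert (chp k) := mkv (chp k) (fun j => if j == k then t else 0).

Lemma cvx_b t j : (t <= 2)%N -> ((if j == k then t else 0) <= chp k j)%N.
Proof. by move=> h; rewrite /chp; case: (j == k). Qed.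

Lemma cvx_le t t' : (t <= t')%N -> (t' <= 2)%N -> vle (cvx t) (cvx t').
Proof.
move=> h h'; apply: mkv_le => j; last exact: cvx_b.
by case: (j == k).
Qed.

Lemma cvx_k t : (t <= 2)%N -> (cvx t k : nat) = t.
Proof. by move=> h; rewrite /cvx mkvE ?eqxx // /chp eqxx. Qed.

Lemma cvx_eq t t' j : j != k -> cvx t j = cvx t' j.
Proof. by move=> ne; rewrite /cvx /mkv (negbTE ne). Qed.

Lemma EA_chain (a b c : ob AC) (x : hom AC a b) (y : hom AC b c)
  (cv : forall i, okv k i -> vsub C i x /\ vsub C i y)
  (cw : k == qidx n -> wsub C x /\ wsub C y) cvx1 cwx1 cvy1 cwy1 cvz cwz :
  compat (@EA k _ _ x cvx1 cwx1) (@EA k _ _ y cvy1 cwy1) (@EA k _ _ (cmp y x) cvz cwz).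
Proof.
set Q := @ChS n C (chp k) k a b c x y cv cw.
have H01 := @cvx_le 0 1 isT isT.
have H12 := @cvx_le 1 2 isT isT.
have H02 := @cvx_le 0 2 isT isT.
have := sarr_cmp (F f Q) H01 H12 H02.
rewrite -/(FA Q H01) -/(FA Q H12) -/(FA Q H02).
have E1 : FA Q H01 = @EA k _ _ x cvx1 cwx1.
  rewrite (FA_edge f Q H01 (@cvx_eq 0 1)); apply: EA_mkA.
  by rewrite /Q -/(sarr _ H01) sarr_Ch !cvx_k.
have E2 : FA Q H12 = @EA k _ _ y cvy1 cwy1.
  rewrite (FA_edge f Q H12 (@cvx_eq 1 2)); apply: EA_mkA.
  by rewrite /Q -/(sarr _ H12) sarr_Ch !cvx_k.
have E3 : FA Q H02 = @EA k _ _ (cmp y x) cvz cwz.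
  rewrite (FA_edge f Q H02 (@cvx_eq 0 2)); apply: EA_mkA.
  by rewrite /Q -/(sarr _ H02) sarr_Ch !cvx_k.
by rewrite E1 E2 E3.
Qed.
End Chain.
Section Square.
Variables k l : 'I_n.+1.
Hypothesis kl : k != l.
Definition svx (b1 b2 : nat) : vert (sqp k l) :=
  mkv (sqp k l) (fun j => if j == k then b1 else if j == l then b2 else 0).

Lemma svx_b b1 b2 j : (b1 <= 1)%N -> (b2 <= 1)%N ->
  ((if j == k then b1 else if j == l then b2 else 0) <= sqp k l j)%N.
Proof. by move=> h1 h2; rewrite /sqp; case: (j == k); case: (j == l). Qed.

Lemma svx_le b1 b2 c1 c2 : (b1 <= c1)%N -> (b2 <= c2)%N -> (c1 <= 1)%N -> (c2 <= 1)%N ->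
  vle (svx b1 b2) (svx c1 c2).
Proof.
move=> h1 h2 h3 h4; apply: mkv_le => j; last exact: svx_b.
by case: (j == k); case: (j == l).
Qed.

Lemma svx_k b1 b2 : (b1 <= 1)%N -> (b2 <= 1)%N -> (svx b1 b2 k : nat) = b1.
Proof. by move=> h1 h2; rewrite /svx mkvE ?eqxx // /sqp eqxx. Qed.
Lemma svx_l b1 b2 : (b1 <= 1)%N -> (b2 <= 1)%N -> (svx b1 b2 l : nat) = b2.
Proof.
have lk : (l == k) = false by apply/negbTE; rewrite eq_sym.
by move=> h1 h2; rewrite /svx mkvE lk ?eqxx // /sqp eqxx orbT.
Qed.

Lemma svx_eqk b b' c j : j != k -> svx b c j = svx b' c j.
Proof. by move=> ne; rewrite /svx /mkv (negbTE ne). Qed.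
Lemma svx_eql b c c' j : j != l -> svx b c j = svx b c' j.
Proof. by move=> ne; rewrite /svx /mkv (negbTE ne); case: (j == k). Qed.

Lemma EA_square (a b c d : ob AC) (x1 : hom AC a b) (y2 : hom AC b d)
  (y1 : hom AC a c) (x2 : hom AC c d) (E : cmp y2 x1 = cmp x2 y1)
  (cx : forall i, okv k i -> vsub C i x1 /\ vsub C i x2)
  (cy : forall i, okv l i -> vsub C i y1 /\ vsub C i y2)
  (wx : k == qidx n -> wsub C x1 /\ wsub C x2)
  (wy : l == qidx n -> wsub C y1 /\ wsub C y2)
  cx1 wx1 cy2 wy2 cy1 wy1 cx2 wx2 :
  exists dd, compat (@EA k _ _ x1 cx1 wx1) (@EA l _ _ y2 cy2 wy2) dd /\
             compat (@EA l _ _ y1 cy1 wy1) (@EA k _ _ x2 cx2 wx2) dd.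
Proof.
set Q := @SqS n C (sqp k l) k l kl a b c d x1 y2 y1 x2 E cx cy wx wy.
have H00_10 := @svx_le 0 0 1 0 isT isT isT isT.
have H10_11 := @svx_le 1 0 1 1 isT isT isT isT.
have H00_01 := @svx_le 0 0 0 1 isT isT isT isT.
have H01_11 := @svx_le 0 1 1 1 isT isT isT isT.
have H00_11 := @svx_le 0 0 1 1 isT isT isT isT.
exists (FA Q H00_11); split.
- have := sarr_cmp (F f Q) H00_10 H10_11 H00_11.
  rewrite -/(FA Q H00_10) -/(FA Q H10_11) -/(FA Q H00_11).
  have E1 : FA Q H00_10 = @EA k _ _ x1 cx1 wx1.
    rewrite (FA_edge f Q H00_10 (@svx_eqk 0 1 0)); apply: EA_mkA.
    by rewrite /Q -/(sarr _ H00_10) sarr_Sq; rewrite /bit !svx_k // !svx_l.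
  have E2 : FA Q H10_11 = @EA l _ _ y2 cy2 wy2.
    rewrite (FA_edge f Q H10_11 (@svx_eql 1 0 1)); apply: EA_mkA.
    by rewrite /Q -/(sarr _ H10_11) sarr_Sq; rewrite /bit !svx_k // !svx_l.
  by rewrite E1 E2.
- have := sarr_cmp (F f Q) H00_01 H01_11 H00_11.
  rewrite -/(FA Q H00_01) -/(FA Q H01_11) -/(FA Q H00_11).
  have E1 : FA Q H00_01 = @EA l _ _ y1 cy1 wy1.
    rewrite (FA_edge f Q H00_01 (@svx_eql 0 0 1)); apply: EA_mkA.
    by rewrite /Q -/(sarr _ H00_01) sarr_Sq; rewrite /bit !svx_k // !svx_l.
  have E2 : FA Q H01_11 = @EA k _ _ x2 cx2 wx2.
    rewrite (FA_edge f Q H01_11 (@svx_eqk 0 1 1)); apply: EA_mkA.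
    by rewrite /Q -/(sarr _ H01_11) sarr_Sq; rewrite /bit !svx_k // !svx_l.
  by rewrite E1 E2.
Qed.
End Square.
Lemma vidx_q (i : 'I_n) : vidx i != qidx n.
Proof. by rewrite -(inj_eq val_inj) /= neq_ltn ltn_ord. Qed.

Lemma okv_vidx (i i' : 'I_n) : okv (vidx i) i' -> i' = i.
Proof.
rewrite /okv (negbTE (vidx_q i)) orbF -(inj_eq val_inj) /= => /eqP e.
by apply: val_inj.
Qed.

Lemma EA_qv (i0 : 'I_n) (x y : ob AC) (h : hom AC x y) (hw : wsub C h) cv1 cw1 cv2 cw2 :
  @EA (qidx n) _ _ h cv1 cw1 = @EA (vidx i0) _ _ h cv2 cw2.
Proof.
have cx : forall i, okv (vidx i0) i -> vsub C i h /\ vsub C i (idm y).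
  by move=> i _; split; [apply: wsub_vsub | apply: vsub_id].
have cy : forall i, okv (qidx n) i -> vsub C i h /\ vsub C i (idm y).
  by move=> i _; split; [apply: wsub_vsub | apply: vsub_id].
have wx : vidx i0 == qidx n -> wsub C h /\ wsub C (idm y).
  by rewrite (negbTE (vidx_q i0)).
have wy : qidx n == qidx n -> wsub C h /\ wsub C (idm y).
  by move=> _; split; [ | apply: wsub_id].
have [dd [c1 c2]] := @EA_square (vidx i0) (qidx n) (vidx_q i0) x y y y h (idm y) h (idm y)
  (erefl _) cx cy wx wy cv2 cw2 (fun i _ => @vsub_id _ C i y) (fun _ => @wsub_id _ C y)
  cv1 cw1 (fun i _ => @vsub_id _ C i y) (fun _ => @wsub_id _ C y).
move: c1 c2; rewrite !EA_id => /compat_idr_eq -> /compat_idr_eq //.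
Qed.
End S6.

Section S7.
Variable n : nat.
Hypothesis hn : (0 < n)%N.
Variables C D : RelCat n.
Variable f : smap (nerve C) (nerve D).
Notation AC := (amb C).
Notation AD := (amb D).
Notation EA := (@EA n C D f).
Notation FA := (@FA n C D f).
Notation gob := (@gob n C D f).

Definition i0 : 'I_n := Ordinal hn.

Lemma cvv (i : 'I_n) (x y : ob AC) (h : hom AC x y) (Hv : vsub C i h) :
  forall i', okv (vidx i) i' -> vsub C i' h.
Proof. by move=> i' /okv_vidx ->. Qed.
Lemma cwv (i : 'I_n) (x y : ob AC) (h : hom AC x y) :
  vidx i == qidx n -> wsub C h.
Proof. by rewrite (negbTE (vidx_q i)). Qed.

Definition ge (i : 'I_n) (x y : ob AC) (h : hom AC x y) (Hv : vsub C i h) : hom AD (gob x) (gob y) :=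
  castA (EA_src f (cvv Hv) (@cwv i x y h)) (EA_tgt f (cvv Hv) (@cwv i x y h)).

Lemma geA (i : 'I_n) (x y : ob AC) (h : hom AC x y) (Hv : vsub C i h) cv cw :
  mkA (ge Hv) = @EA (vidx i) x y h cv cw.
Proof. rewrite mkA_castA; exact: EA_mkA. Qed.

Fixpoint img (x y : ob AC) (P : Defs.path n AC x y) : pvalid (@vsub n C) P -> hom AD (gob x) (gob y) :=
  match P as P0 in Defs.path _ _ x0 y0 return pvalid (@vsub n C) P0 -> hom AD (gob x0) (gob y0) with
  | pnil x0 => fun _ => idm (gob x0)
  | pcons x0 y0 z0 i h q => fun H => cmp (ge (proj1 H)) (@img x0 y0 q (proj2 H))
  end.

Lemma img_irr x y (P : Defs.path n AC x y) H H' : img (P:=P) H = img (P:=P) H'.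
Proof. by rewrite (proof_irrelevance _ H H'). Qed.

Lemma pvalid_cat x y z (r : Defs.path n AC y z) (s : Defs.path n AC x y) :
  pvalid (@vsub n C) (pcat r s) <-> pvalid (@vsub n C) r /\ pvalid (@vsub n C) s.
Proof.
elim: r s => [y0|x0 y0 z0 i h q IH] s /=; first by tauto.
by rewrite IH; tauto.
Qed.

Lemma peval_cat x y z (r : Defs.path n AC y z) (s : Defs.path n AC x y) :
  peval (pcat r s) = cmp (peval r) (peval s).
Proof.
elim: r s => [y0|x0 y0 z0 i h q IH] s /=; first by rewrite cmp_id_l.
by rewrite IH cmp_assoc.
Qed.

Lemma img_cons x y z (i : 'I_n) (h : hom AC y z) (q : Defs.path n AC x y) H :
  img (P := pcons i h q) H = cmp (ge (proj1 H)) (img (P := q) (proj2 H)).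
Proof. by []. Qed.

Lemma img_cat x y z (r : Defs.path n AC y z) (s : Defs.path n AC x y) H Hr Hs :
  img (P := pcat r s) H = cmp (img (P := r) Hr) (img (P := s) Hs).
Proof.
elim: r s H Hr Hs => [y0|x0 y0 z0 i h q IH] s H Hr Hs.
  by rewrite /= cmp_id_l; apply: img_irr.
rewrite [img (P := pcat _ _) _]img_cons img_cons (IH s (proj2 H) (proj2 Hr) Hs) cmp_assoc.
by rewrite (proof_irrelevance _ (proj1 H) (proj1 Hr)).
Qed.

Lemma valid_sq x y (P Q : Defs.path n AC x y) :
  sqrel (@vsub n C) P Q -> (pvalid (@vsub n C) P <-> pvalid (@vsub n C) Q).
Proof.
elim => {x y P Q}.
- by [].
- by move=> x y p q _ IH; tauto.
- by move=> x y p q r _ IH1 _ IH2; tauto.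
- by move=> x i /=; split => // _; split => //; apply: vsub_id.
- move=> a b c d i j x1 y2 y1 x2 h1 h2 h3 h4 _ /=; tauto.
- move=> x y z t r p q s _ IH; rewrite !pvalid_cat IH; tauto.
Qed.

Lemma ge_id (i : 'I_n) (x : ob AC) (Hv : vsub C i (idm x)) : ge Hv = idm (gob x).
Proof. apply: mkA_inj; rewrite (geA _ (cvv Hv) (@cwv i x x (idm x))); exact: EA_id. Qed.

Lemma img_sq x y (P Q : Defs.path n AC x y) :
  sqrel (@vsub n C) P Q -> forall HP HQ, img (P := P) HP = img (P := Q) HQ.
Proof.
elim => {x y P Q}.
- by move=> x y p HP HQ; apply: img_irr.
- by move=> x y p q _ IH HP HQ; rewrite (IH HQ HP).
- move=> x y p q r h1 IH1 _ IH2 HP HR.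
  have HQ : pvalid (@vsub n C) q by apply/(valid_sq h1).
  by rewrite (IH1 HP HQ) (IH2 HQ HR).
- move=> x i [H1 H2] HQ /=; by rewrite ge_id cmp_id_l.
- move=> a b c d i j x1 y2 y1 x2 hx1 hx2 hy1 hy2 E HP HQ /=.
  rewrite !cmp_id_r; apply: mkA_inj.
  have c1 := compat_mk (ge (proj1 (proj2 HP))) (ge (proj1 HP)).
  have c2 := compat_mk (ge (proj1 (proj2 HQ))) (ge (proj1 HQ)).
  have Hy2 := proj1 HP; have Hx1 := proj1 (proj2 HP).
  have Hx2 := proj1 HQ; have Hy1 := proj1 (proj2 HQ).
  case: (eqVneq i j) => [eij|nij].
  + subst j.
    have cv1 : forall i', okv (vidx i) i' -> vsub C i' x1 /\ vsub C i' y2.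
      by move=> i' /okv_vidx ->.
    have cv2 : forall i', okv (vidx i) i' -> vsub C i' y1 /\ vsub C i' x2.
      by move=> i' /okv_vidx ->.
    have cw1 : vidx i == qidx n -> wsub C x1 /\ wsub C y2 by rewrite (negbTE (vidx_q i)).
    have cw2 : vidx i == qidx n -> wsub C y1 /\ wsub C x2 by rewrite (negbTE (vidx_q i)).
    have hz1 : vsub C i (cmp y2 x1) by apply: vsub_cmp.
    have hz2 : vsub C i (cmp x2 y1) by apply: vsub_cmp.
    have d1 := EA_chain f cv1 cw1 (cvv Hx1) (@cwv i _ _ x1) (cvv Hy2) (@cwv i _ _ y2)
                 (cvv hz1) (@cwv i _ _ (cmp y2 x1)).
    have d2 := EA_chain f cv2 cw2 (cvv Hy1) (@cwv i _ _ y1) (cvv Hx2) (@cwv i _ _ x2)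
                 (cvv hz2) (@cwv i _ _ (cmp x2 y1)).
    rewrite (geA (proj1 (proj2 HP)) (cvv Hx1) (@cwv i _ _ x1)) (geA (proj1 HP) (cvv Hy2) (@cwv i _ _ y2)) in c1.
    rewrite (geA (proj1 (proj2 HQ)) (cvv Hy1) (@cwv i _ _ y1)) (geA (proj1 HQ) (cvv Hx2) (@cwv i _ _ x2)) in c2.
    rewrite (compat_uniq c1 d1) (compat_uniq c2 d2); apply: EA_mkA; by rewrite E.
  + have kl : vidx i != vidx j.
      by apply: contra nij => /eqP e; apply/eqP/val_inj; move: (f_equal val e).
    have cx : forall i', okv (vidx i) i' -> vsub C i' x1 /\ vsub C i' x2.
      by move=> i' /okv_vidx ->.
    have cy : forall i', okv (vidx j) i' -> vsub C i' y1 /\ vsub C i' y2.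
      by move=> i' /okv_vidx ->.
    have wx : vidx i == qidx n -> wsub C x1 /\ wsub C x2 by rewrite (negbTE (vidx_q i)).
    have wy : vidx j == qidx n -> wsub C y1 /\ wsub C y2 by rewrite (negbTE (vidx_q j)).
    have [dd [d1 d2]] := EA_square f kl E cx cy wx wy (cvv Hx1) (@cwv i _ _ x1)
      (cvv Hy2) (@cwv j _ _ y2) (cvv Hy1) (@cwv j _ _ y1) (cvv Hx2) (@cwv i _ _ x2).
    rewrite (geA (proj1 (proj2 HP)) (cvv Hx1) (@cwv i _ _ x1)) (geA (proj1 HP) (cvv Hy2) (@cwv j _ _ y2)) in c1.
    rewrite (geA (proj1 (proj2 HQ)) (cvv Hy1) (@cwv j _ _ y1)) (geA (proj1 HQ) (cvv Hx2) (@cwv i _ _ x2)) in c2.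
    by rewrite (compat_uniq c1 d1) (compat_uniq c2 d2).
- move=> x y z t r p q s h IH HP HQ.
  have [Hr Hps] := proj1 (pvalid_cat _ _) HP.
  have [Hp Hs] := proj1 (pvalid_cat _ _) Hps.
  have [_ Hqs] := proj1 (pvalid_cat _ _) HQ.
  have [Hq _] := proj1 (pvalid_cat _ _) Hqs.
  rewrite (img_cat HP Hr Hps) (img_cat HQ Hr Hqs) (img_cat Hps Hp Hs) (img_cat Hqs Hq Hs).
  by rewrite (IH Hp Hq).
Qed.
End S7.

Section S8.
Variable n : nat.
Hypothesis hn : (0 < n)%N.
Variables C D : RelCat n.
Variable f : smap (nerve C) (nerve D).
Notation AC := (amb C).
Notation AD := (amb D).
Notation EA := (@EA n C D f).
Notation FA := (@FA n C D f).
Notation gob := (@gob n C D f).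
Notation img := (@img n C D f).
Notation ge := (@ge n C D f).

Definition ghom (x y : ob AC) (h : hom AC x y) : hom AD (gob x) (gob y) :=
  let s := constructive_indefinite_description _ (@rc_gen n C x y h) in
  img (P:=proj1_sig s) (proj1 (proj2_sig s)).

Lemma W x y (P : Defs.path n AC x y) HP : img (P:=P) HP = ghom (peval P).
Proof.
rewrite /ghom; case: (constructive_indefinite_description _ _) => Q [HQ EQ] /=.
apply: img_sq; apply: rc_rel => //; by rewrite EQ.
Qed.

Lemma ghom_path x y (h : hom AC x y) (P : Defs.path n AC x y) HP :
  peval P = h -> ghom h = img (P:=P) HP.
Proof. by move=> E; rewrite W E. Qed.

Lemma ghom_id x : ghom (idm x) = idm (gob x).
Proof. by rewrite (@ghom_path x x (idm x) (pnil x) I). Qed.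

Lemma ghom_cmp x y z (h1 : hom AC x y) (h2 : hom AC y z) :
  ghom (cmp h2 h1) = cmp (ghom h2) (ghom h1).
Proof.
have [P1 [HP1 E1]] := @rc_gen n C x y h1.
have [P2 [HP2 E2]] := @rc_gen n C y z h2.
have HP : pvalid (@vsub n C) (pcat P2 P1) by apply/pvalid_cat.
rewrite (@ghom_path _ _ _ (pcat P2 P1) HP); last by rewrite peval_cat E1 E2.
by rewrite (img_cat f HP HP2 HP1) (ghom_path HP1 E1) (ghom_path HP2 E2).
Qed.

Lemma ghom_single x y (i : 'I_n) (h : hom AC x y) (Hv : vsub C i h) :
  ghom h = ge Hv.
Proof.
have HP : pvalid (@vsub n C) (pcons i h (pnil x)) by split.
rewrite (ghom_path HP); last by rewrite /= cmp_id_r.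
rewrite /= cmp_id_r; congr (ge _); exact: proof_irrelevance.
Qed.

Lemma vsub_mkA (i : 'I_n) (x y x' y' : ob AD) (h : hom AD x y) (h' : hom AD x' y') :
  mkA h = mkA h' -> vsub D i h -> vsub D i h'.
Proof. move=> E; case: (mkA_ob E) => e1 e2; subst; by rewrite (mkA_inj E). Qed.
Lemma wsub_mkA (x y x' y' : ob AD) (h : hom AD x y) (h' : hom AD x' y') :
  mkA h = mkA h' -> wsub D h -> wsub D h'.
Proof. move=> E; case: (mkA_ob E) => e1 e2; subst; by rewrite (mkA_inj E). Qed.

Lemma ghomEA (k : 'I_n.+1) x y (h : hom AC x y) cv cw : mkA (ghom h) = @EA k x y h cv cw.
Proof.
case: (ltnP k n) => hk.
- pose i := Ordinal hk.
  have ek : k = vidx i by apply: val_inj.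
  move: cv cw; rewrite ek => cv cw.
  have Hv : vsub C i h by apply: cv; rewrite /okv eqxx.
  by rewrite (ghom_single Hv) (geA f Hv cv cw).
- have ek : k = qidx n.
    by apply: val_inj => /=; apply/eqP; rewrite eqn_leq hk -ltnS ltn_ord.
  subst k.
  have Hw : wsub C h by apply: cw.
  have Hv : vsub C (i0 hn) h by apply: wsub_vsub.
  rewrite (ghom_single Hv) (geA f Hv (cvv Hv) (@cwv n C (i0 hn) x y h)).
  symmetry; exact: EA_qv.
Qed.

Definition gF : relfun C D.
Proof.
refine (@RelFun n C D gob ghom ghom_id ghom_cmp _ _).
- move=> i x y h Hv; rewrite (ghom_single Hv).
  apply: (vsub_mkA (h := shom (F f (@EdgeS n C (vidx i) x y h (cvv Hv) (@cwv n C i x y h))) (e01 (vidx i)))).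
    by rewrite (geA f Hv (cvv Hv) (@cwv n C i x y h)).
  apply: shom_v; apply/forallP => j; apply/implyP => /andP [h1 _].
  by rewrite /e0 /e1 /mkv (negbTE h1).
- move=> x y h Hw.
  have cv : forall i, okv (qidx n) i -> vsub C i h by move=> i _; apply: wsub_vsub.
  have cw : qidx n == qidx n -> wsub C h by [].
  apply: (wsub_mkA (h := shom (F f (@EdgeS n C (qidx n) x y h cv cw)) (e01 (qidx n)))).
    by rewrite (ghomEA cv cw).
  apply: shom_w; apply/forallP => j; apply/implyP => h1.
  by rewrite /e0 /e1 /mkv (negbTE h1).
Defined.
End S8.

Section S9.
Variable n : nat.
Hypothesis hn : (0 < n)%N.
Variables C D : RelCat n.
Variable f : smap (nerve C) (nerve D).
Notation AC := (amb C).
Notation AD := (amb D).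
Notation FA := (@FA n C D f).
Notation gob := (@gob n C D f).
Notation ghom := (@ghom n C D f).

Variable p : midx n.
Variable s : simplex C p.

Lemma ghom_edge k (w0 w1 : vert p) (H : vle w0 w1) (Hk : forall j, j != k -> w0 j = w1 j) :
  mkA (ghom (shom s H)) = FA s H.
Proof. rewrite (FA_edge f s H Hk); exact: (ghomEA hn). Qed.

Section Stair.
Variables u v : vert p.
Hypothesis Huv : vle u v.

Definition zz (m : nat) : vert p := fun j => if (j < m)%N then v j else u j.

Lemma zz_le0 m : vle u (zz m).
Proof. apply/forallP => j; rewrite /zz; case: (j < m)%N => //; exact: vle_at Huv. Qed.

Lemma zz_le m : vle (zz m) (zz m.+1).
Proof.
apply/forallP => j; rewrite /zz; have hj := vle_at j Huv.
case: (ltnP j m) => h1; first by rewrite ltnS (ltnW h1).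
by case: (ltnP j m.+1).
Qed.

Lemma zz_edge m : (m < n.+1)%N -> forall j, j != inord m -> zz m j = zz m.+1 j.
Proof.
move=> hm j ne.
have jm : (nat_of_ord j != m).
  by apply: contra ne => /eqP e; apply/eqP/val_inj; rewrite /= inordK // -e.
have e : (j < m)%N = (j < m.+1)%N by rewrite ltn_neqAle ltnS jm.
by rewrite /zz e.
Qed.

Lemma zz0 : zz 0 = u.
Proof. by apply: functional_extensionality_dep => j. Qed.

Lemma zzN : zz n.+1 = v.
Proof. by apply: functional_extensionality_dep => j; rewrite /zz ltn_ord. Qed.

Lemma stair m : (m <= n.+1)%N -> forall H : vle u (zz m), mkA (ghom (shom s H)) = FA s H.
Proof.
elim: m => [_|m IH hm].
  rewrite zz0 => H; rewrite shom_id (ghom_id f) /FA sarr_id.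
  by rewrite gob_vertex.
move=> H.
have H1 := zz_le0 m; have H2 := zz_le m.
rewrite (shom_cmp s H1 H2 H) (ghom_cmp f).
have := sarr_cmp (F f s) H1 H2 H.
rewrite -/(FA s H1) -/(FA s H2) -/(FA s H).
rewrite -(IH (ltnW hm) H1) -(ghom_edge H2 (zz_edge hm)) => c.
exact: compat_uniq (compat_mk _ _) c.
Qed.
End Stair.

Lemma gF_arr u v (H : vle u v) : mkA (ghom (shom s H)) = FA s H.
Proof.
have := stair H (leqnn n.+1); rewrite zzN; exact.
Qed.
End S9.

Lemma Ng n (hn : (0 < n)%N) (C D : RelCat n) (f : smap (nerve C) (nerve D)) (p : midx n)
  (s : simplex C p) : spush (gF hn f) s = F f s.
Proof.
apply: simplex_eqA => u v H; exact: gF_arr.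
Qed.

Definition rcomp n (A B E : RelCat n) (G : relfun B E) (Fm : relfun A B) : relfun A E.
Proof.
refine (@RelFun n A E (fun x => fob G (fob Fm x)) (fun x y h => fhom G (fhom Fm h)) _ _ _ _).
- by move=> x; rewrite !fhom_id.
- by move=> x y z h1 h2; rewrite !fhom_cmp.
- by move=> i x y h hv; do 2 apply: fhom_v.
- by move=> x y h hw; do 2 apply: fhom_w.
Defined.

Definition rid n (A : RelCat n) : relfun A A.
Proof.
refine (@RelFun n A A (fun x => x) (fun x y h => h) _ _ _ _) => //.
Defined.

Definition sid n (X : sSet n) : smap X X := @SMap n X X (fun p x => x) (fun p p' a x => erefl).

Lemma spush_comp n (A B E : RelCat n) (G : relfun B E) (Fm : relfun A B) (p : midx n)
  (s : simplex A p) : spush G (spush Fm s) = spush (rcomp G Fm) s.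
Proof. by apply: simplex_eqA => u v H. Qed.

Lemma spush_id n (A : RelCat n) (p : midx n) (s : simplex A p) : spush (rid A) s = s.
Proof. by apply: simplex_eqA => u v H. Qed.

Unset Implicit Arguments.
Theorem proposition4p5 (n : nat) (hn : (0 < n)%N)
  (K : sSet n -> RelCat n)
  (eta : forall X : sSet n, smap X (nerve (K X)))
  (HK : forall X : sSet n, unit_universal (eta X))
  (C : RelCat n) :
  is_iso (eta (nerve C)).
Proof.
set X := nerve C.
have [eps [Heps _]] := HK X C (sid X).
set iota := gF hn (eta X).
have Hiota : forall p (s : simplex C p), spush iota s = smf (eta X) s.
  by move=> p s; rewrite /iota Ng.
have [g [_ Hg]] := HK X (K X) (eta X).
have e1 : rcomp iota eps = g.
  apply: Hg => p x /=.
  rewrite -spush_comp.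
  have -> : spush eps (smf (eta X) x) = x by exact: (Heps p x).
  exact: Hiota.
have e2 : rid (K X) = g.
  by apply: Hg => p x /=; rewrite spush_id.
exists (nerve_map eps); split.
- move=> p x; exact: (Heps p x).
- move=> p y /=.
  by rewrite -Hiota spush_comp e1 -e2 spush_id.
Qed.
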